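(* Let $q$ be a prime power, $k\ge 3$ and $n\ge \frac{k(k+1)}{2}+k-3$ with $n\le q$. Then for every vector $\boldsymbol\alpha=(\alpha_1,\dots,\alpha_n)$ of pairwise distinct elements of $\mathbb F_q$, the Reed–Solomon code $\mathrm{RS}_{\boldsymbol\alpha}(n,k)$ has insdel distance at most $2n-4k+4$.
   Context: $\mathrm{RS}_{\boldsymbol\alpha}(n,k)=\{(f(\alpha_1),\dots,f(\alpha_n)): f\in\mathbb F_q[x],\ \deg f<k\}$. For $\mathbf u,\mathbf v\in\mathbb F_q^n$, the insdel distance $d_I(\mathbf u,\mathbf v)$ is the minimum number of insertions and deletions transforming $\mathbf u$ into $\mathbf v$; equivalently $d_I(\mathbf u,\mathbf v)=2n-2\ell_{\rm LCS}(\mathbf u,\mathbf v)$ where $\ell_{\rm LCS}$ is the length of a longest common subsequence. The insdel distance of a code is the minimum insdel distance between distinct codewords. *)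

(* Defs.v *)
From HB Require Import structures.
From mathcomp Require Import all_boot all_order all_algebra all_field.
Set Implicit Arguments. Unset Strict Implicit. Unset Printing Implicit Defensive.
Import GRing.Theory.
Local Open Scope ring_scope.

Definition lcs_len (T : eqType) (u v : seq T) : nat :=
  \max_(m : (size u).-tuple bool | subseq (mask m u) v) size (mask m u).

(* Insdel distance between two words of the same length n. *)
Definition insdel_dist (T : eqType) (u v : seq T) : nat :=
  (2 * size u - 2 * lcs_len u v)%N.

(* Reed-Solomon code RS_alpha(n,k): evaluations of all polynomials of degree < k
   (each is Poly c for a unique coefficient k-tuple c) at alpha_1..alpha_n. *)
Definition RS_code (F : finFieldType) (n k : nat) (alpha : n.-tuple F)
  : {set n.-tuple F} :=
  [set [tuple of map (fun a => (Poly (c : seq F)).[a]) alpha] | c : k.-tuple F].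

(* Insdel distance of a code: minimum insdel distance between distinct codewords
   (with the trivial upper bound 2n as default for codes with < 2 words). *)
Definition code_insdel_dist (F : finFieldType) (n : nat) (C : {set n.-tuple F}) : nat :=
  \big[minn/(2 * n)%N]_(p in setX C C | p.1 != p.2) insdel_dist (p.1 : seq F) p.2.

(* Main.v *)
Require Import Defs.
From HB Require Import structures.
From mathcomp Require Import all_boot all_order all_algebra all_field.
From mathcomp Require Import zify.
Set Implicit Arguments. Unset Strict Implicit. Unset Printing Implicit Defensive.
Import GRing.Theory.

Lemma poly_roots_zero (F : fieldType) (p : {poly F}) (K n : nat) (alpha : n.-tuple F) :
  uniq alpha -> (K <= n)%N -> (size p <= K)%N ->
  (forall t, (t < K)%N -> (p.[nth 0 alpha t] = 0)%R) -> p = 0%R.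
Proof.
move=> Hu HK Hs Hr; apply/eqP; apply/negPn/negP => p0.
have Hall : all (root p) (take K alpha).
  apply/(all_nthP 0%R) => i; rewrite size_take size_tuple => Hi.
  rewrite nth_take; last by move: Hi; case: (ltnP K n); lia.
  by apply/eqP/Hr; move: Hi; case: (ltnP K n); lia.
have := max_poly_roots p0 Hall (take_uniq K Hu).
rewrite size_take size_tuple.
case: ifP => H1 H2.
  by have := leq_trans H2 Hs; rewrite ltnn.
by have := leq_trans H2 (leq_trans Hs HK); rewrite ltnn.
Qed.

Lemma bigminn_le (I : eqType) (r : seq I) (P : pred I) (F : I -> nat) x i0 :
  i0 \in r -> P i0 -> (\big[minn/x]_(i <- r | P i) F i <= F i0)%N.
Proof.
elim: r => // a r IH; rewrite inE big_cons => /orP [/eqP <- -> | /IH H Pi].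
  exact: geq_minl.
case: (P a); last exact: H.
by apply: leq_trans (geq_minr _ _) (H Pi).
Qed.

Lemma subseq_behead (T : eqType) (s : seq T) : subseq (behead s) s.
Proof. by case: s => //= x s; exact: subseq_cons. Qed.

Lemma mask_prefix (T : Type) (s : seq T) m : (m <= size s)%N ->
  mask (nseq m true ++ nseq (size s - m) false) s = take m s.
Proof.
move=> Hm; rewrite -{2}(cat_take_drop m s) mask_cat; last first.
  by rewrite size_nseq size_take; case: ltnP => //; lia.
by rewrite mask_false cats0 mask_true // size_take; case: ltnP.
Qed.

Theorem theorem3p9 (F : finFieldType) (n k : nat) (alpha : n.-tuple F) :
  (3 <= k)%N ->
  (k * (k + 1) %/ 2 + k - 3 <= n)%N ->
  (n <= #|F|)%N ->
  uniq alpha ->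
  (code_insdel_dist (RS_code k alpha) <= 2 * n + 4 - 4 * k)%N.
Proof.
move=> Hk Hn _ Hu.
have Hn2 : (2 * k - 1 <= n)%N.
  have : (k + 2 <= k * (k + 1) %/ 2)%N.
    rewrite leq_divRL //.
    by rewrite mulnDl mulnDr; nia.
  lia.
destruct k as [|k']; first by [].
set K := k'.+1 in Hk Hn Hn2 *.
set m := (2 * k')%N.
pose a t : F := nth 0%R alpha t.
pose A : 'M[F]_(K + K, m.+1) := (\matrix_(r < K + K, j < m.+1)
  (if (r < K)%N then (if (j < m)%N then a j ^+ r else a 0%N ^+ r)
   else (if (j < m)%N then - a j.+1 ^+ (r - K) else 0)))%R.
have Hker : kermx A != 0%R.
  rewrite -mxrank_eq0 mxrank_ker.
  have := rank_leq_col A; lia.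
have [i Hi] : exists i, row i (kermx A) != 0%R.
  case: (pickP (fun i => row i (kermx A) != 0%R)) => [i Hi|H0]; first by exists i.
  move: Hker; suff -> : kermx A = 0%R by rewrite eqxx.
  apply/row_matrixP => i; rewrite row0; apply/eqP; exact: negbFE (H0 i).
set u := row i (kermx A) in Hi *.
have HuA : (u *m A = 0)%R by rewrite /u -row_mul mulmx_ker row0.
clearbody u.
pose Ef i := u ord0 (lshift K (inord i)).
pose Eg i := u ord0 (rshift K (inord i)).
pose f := (\poly_(i < K) Ef i)%R. pose g := (\poly_(i < K) Eg i)%R.
have Hcol : forall jj : 'I_m.+1, ((u *m A) ord0 jj =
    if (jj < m)%N then f.[a jj] - g.[a jj.+1] else f.[a 0%N])%R.
  move=> jj; rewrite !mxE big_split_ord /= !horner_poly.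
  case: ifP => Hj.
    rewrite -sumrN; congr (_ + _)%R; apply: eq_bigr => j _;
      rewrite /A !mxE /= /Ef /Eg inord_val Hj.
      by rewrite ltn_ord.
    by rewrite ltnNge leq_addr /= addKn mulrN.
  rewrite [X in (_ + X)%R]big1 ?addr0.
    apply: eq_bigr => j _; rewrite /A !mxE /= /Ef inord_val Hj ltn_ord.
    by [].
  by move=> j _; rewrite /A !mxE /= Hj ltnNge leq_addr /= mulr0.
have Hfg j : (j < m)%N -> (f.[a j] = g.[a j.+1])%R.
  move=> Hj; have Hj' : (j < m.+1)%N by lia.
  have := Hcol (inord j); rewrite HuA mxE inordK //.
  by rewrite Hj => /esym/eqP; rewrite subr_eq0 => /eqP.
have Hf0 : (f.[a 0%N] = 0)%R.
  by have := Hcol (inord m); rewrite HuA mxE inordK // ltnn.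
have Hszf : (size f <= K)%N by exact: size_poly.
have Hszg : (size g <= K)%N by exact: size_poly.
have HKn : (K <= n)%N by lia.
have fg : f != g.
  apply/negP => /eqP efg.
  have Hz t : (t <= m)%N -> (f.[a t] = 0)%R.
    elim: t => [|t IH] Ht; first exact: Hf0.
    by rewrite efg -Hfg ?IH -?efg //; lia.
  have f0 : f = 0%R.
    apply: (poly_roots_zero Hu HKn Hszf) => t Ht; apply: Hz; lia.
  have g0 : g = 0%R by rewrite -efg.
  move: Hi; apply/negP; rewrite negbK; apply/eqP/rowP => r.
  rewrite mxE -(splitK r); case: (split r) => j /=.
    have := coef_poly K Ef j; rewrite -/f f0 coef0 ltn_ord /Ef inord_val.
    by move=> <-.
  have := coef_poly K Eg j; rewrite -/g g0 coef0 ltn_ord /Eg inord_val.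
  by move=> <-.
pose Tf : K.-tuple F := Tuple (introT eqP (size_mkseq Ef K)).
pose Tg : K.-tuple F := Tuple (introT eqP (size_mkseq Eg K)).
have PTf : Poly (Tf : seq F) = f by rewrite /f unlock.
have PTg : Poly (Tg : seq F) = g by rewrite /g unlock.
set wf := [tuple of map (fun x => (Poly (Tf : seq F)).[x]%R) alpha].
set wg := [tuple of map (fun x => (Poly (Tg : seq F)).[x]%R) alpha].
have wfC : wf \in RS_code K alpha by apply/imsetP; exists Tf.
have wgC : wg \in RS_code K alpha by apply/imsetP; exists Tg.
have Hwf t : (t < n)%N -> nth 0%R (wf : seq F) t = f.[a t]%R.
  by move=> Ht; rewrite (nth_map 0%R) ?size_tuple // PTf.
have Hwg t : (t < n)%N -> nth 0%R (wg : seq F) t = g.[a t]%R.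
  by move=> Ht; rewrite (nth_map 0%R) ?size_tuple // PTg.
have Hsz : size (wf : seq F) = n by rewrite size_tuple.
have Hszg' : size (wg : seq F) = n by rewrite size_tuple.
have wfg : wf != wg.
  apply/negP => /eqP E.
  have : (f - g = 0)%R.
    apply: (poly_roots_zero Hu HKn).
      apply: leq_trans (size_polyD _ _) _.
      by rewrite size_polyN geq_max Hszf Hszg.
    move=> t Ht; have Htn : (t < n)%N by lia.
    by rewrite hornerD hornerN -Hwf // -Hwg // E subrr.
  by move/eqP; rewrite subr_eq0; apply/negP.
have Hl : (m <= lcs_len (wf : seq F) wg)%N.
  rewrite /lcs_len.
  have Hm : (m <= size (wf : seq F))%N by rewrite Hsz; lia.
  have Hmm : size (nseq m true ++ nseq (size (wf : seq F) - m) false) == size (wf : seq F).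
    by rewrite size_cat !size_nseq subnKC.
  pose mm : (size (wf : seq F)).-tuple bool := Tuple Hmm.
  have Htk : take m (wf : seq F) = take m (behead (wg : seq F)).
    apply: (@eq_from_nth _ 0%R).
      by rewrite !size_take size_behead Hsz Hszg'; case: ifP; case: ifP; lia.
    move=> t; rewrite size_take Hsz => Ht.
    have Htm : (t < m)%N by move: Ht; case: ifP; lia.
    rewrite !nth_take // nth_behead Hwf ?Hwg ?Hfg //; lia.
  have HP : subseq (mask mm wf) wg.
    rewrite /= mask_prefix // Htk.
    exact: subseq_trans (take_subseq _ _) (subseq_behead _).
  apply: leq_trans (leq_bigmax_cond mm HP).
  by rewrite [mask _ _](mask_prefix Hm) size_take Hsz; case: ifP; lia.
have Hd : (insdel_dist (wf : seq F) wg <= 2 * n + 4 - 4 * K)%N.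
  rewrite /insdel_dist Hsz; lia.
rewrite /code_insdel_dist.
apply: leq_trans (bigminn_le _ _ (i0 := (wf, wg)) (mem_index_enum _) _) _.
  by rewrite /= in_setX wfC wgC.
exact: Hd.
Qed.
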